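(* The set $\{f\in\mathcal X_M': f(0)\le1\}$ is compact in $(\mathcal X_M',\tau_{AW})$.
   Context: For $f:\mathbb R\to[-\infty,\infty]$, $\mathrm{epi}(f)=\{(\theta,b)\in\mathbb R^2:b\ge f(\theta)\}$. On $\mathbb R^2$ use the box metric $d(x,y)=\max(|x_1-y_1|,|x_2-y_2|)$, $d(x,A)=\inf_{y\in A}d(x,y)$, $\overline B_k=\{x:d(0,x)\le k\}$. $\mathcal X_M'$ is the set of lower semicontinuous convex $f:\mathbb R\to[0,\infty]$ with $f(0)<\infty$, equipped with the Attouch–Wets topology $\tau_{AW}$ (identifying functions with their epigraphs), whose local base at $f$ is $V_k(f)=\{g:\sup_{x\in\overline B_k}|d(x,\mathrm{epi}(g))-d(x,\mathrm{epi}(f))|<1/k\}$, $k\in\mathbb N$. *)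

(* Defs.v *)
From Stdlib Require Import Reals Lra List Classical ClassicalEpsilon.
Open Scope R_scope.

(* Values of functions in X_M' lie in [0,+oo]; we use reals extended by +oo. *)
Inductive ERbar : Type := Fin (r : R) | PInf.

Definition epi (f : R -> ERbar) (p : R * R) : Prop :=
  match f (fst p) with Fin v => v <= snd p | PInf => False end.

Definition boxd (x y : R * R) : R :=
  Rmax (Rabs (fst x - fst y)) (Rabs (snd x - snd y)).

Definition is_glb (S : R -> Prop) (m : R) : Prop :=
  (forall r, S r -> m <= r) /\ (forall m', (forall r, S r -> m' <= r) -> m' <= m).

(* d(x,A) = inf_{y in A} d(x,y) (well defined whenever A is nonempty). *)
Definition dset (x : R * R) (A : R * R -> Prop) : R :=
  epsilon (inhabits 0) (fun m => is_glb (fun r => exists y, A y /\ r = boxd x y) m).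

Definition ball (k : nat) (x : R * R) : Prop := boxd (0, 0) x <= INR k.

Definition AWdev (k : nat) (f g : R -> ERbar) : R :=
  epsilon (inhabits 0)
    (fun s => is_lub (fun r => exists x, ball k x /\
                         r = Rabs (dset x (epi g) - dset x (epi f))) s).

Definition Vk (k : nat) (f g : R -> ERbar) : Prop := AWdev k f g < 1 / INR k.

Definition ERlt (a : R) (e : ERbar) : Prop :=
  match e with Fin v => a < v | PInf => True end.

Definition nonneg_valued (f : R -> ERbar) : Prop :=
  forall t v, f t = Fin v -> 0 <= v.

Definition convex_fun (f : R -> ERbar) : Prop :=
  forall p q (l : R), epi f p -> epi f q -> 0 <= l <= 1 ->
    epi f (l * fst p + (1 - l) * fst q, l * snd p + (1 - l) * snd q).

Definition lsc (f : R -> ERbar) : Prop :=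
  forall t a, ERlt a (f t) ->
    exists delta, 0 < delta /\ forall s, Rabs (s - t) < delta -> ERlt a (f s).

Definition XM (f : R -> ERbar) : Prop :=
  lsc f /\ convex_fun f /\ nonneg_valued f /\ f 0 <> PInf.

Definition AWopen (U : (R -> ERbar) -> Prop) : Prop :=
  forall f, XM f -> U f ->
    exists k : nat, (1 <= k)%nat /\ forall g, XM g -> Vk k f g -> U g.

Definition AWcompact (K : (R -> ERbar) -> Prop) : Prop :=
  (forall f, K f -> XM f) /\
  forall (I : Type) (U : I -> (R -> ERbar) -> Prop),
    (forall i, AWopen (U i)) ->
    (forall f, K f -> exists i, U i f) ->
    exists l : list I, forall f, K f -> exists i, In i l /\ U i f.

Definition Kset (f : R -> ERbar) : Prop :=
  XM f /\ exists v, f 0 = Fin v /\ v <= 1.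

(* Main.v *)
Require Import Defs.
From Stdlib Require Import Reals Lra Lia List Classical ClassicalEpsilon ZArith.
Open Scope R_scope.


Lemma boxd_fst x y : Rabs (fst x - fst y) <= boxd x y.
Proof. unfold boxd; apply Rmax_l. Qed.
Lemma boxd_snd x y : Rabs (snd x - snd y) <= boxd x y.
Proof. unfold boxd; apply Rmax_r. Qed.
Lemma boxd_le x y c : Rabs (fst x - fst y) <= c -> Rabs (snd x - snd y) <= c -> boxd x y <= c.
Proof. intros; unfold boxd; apply Rmax_lub; auto. Qed.
Lemma boxd_ge0 x y : 0 <= boxd x y.
Proof. eapply Rle_trans; [apply Rabs_pos| apply boxd_fst]. Qed.
Lemma boxd_sym x y : boxd x y = boxd y x.
Proof. unfold boxd; rewrite (Rabs_minus_sym (fst x)), (Rabs_minus_sym (snd x)); auto. Qed.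
Lemma boxd_refl x : boxd x x = 0.
Proof. unfold boxd; rewrite !Rminus_diag, Rabs_R0; unfold Rmax; destruct Rle_dec; lra. Qed.
Lemma boxd_tri x y z : boxd x z <= boxd x y + boxd y z.
Proof.
  apply boxd_le.
  - replace (fst x - fst z) with ((fst x - fst y) + (fst y - fst z)) by ring.
    eapply Rle_trans; [apply Rabs_triang|]. pose proof (boxd_fst x y); pose proof (boxd_fst y z); lra.
  - replace (snd x - snd z) with ((snd x - snd y) + (snd y - snd z)) by ring.
    eapply Rle_trans; [apply Rabs_triang|]. pose proof (boxd_snd x y); pose proof (boxd_snd y z); lra.
Qed.

Lemma abs_comb l a b : 0 <= l <= 1 -> Rabs (l * a + (1 - l) * b) <= l * Rabs a + (1 - l) * Rabs b.
Proof.
  intros H. eapply Rle_trans; [apply Rabs_triang|].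
  rewrite !Rabs_mult, (Rabs_right l), (Rabs_right (1 - l)); lra.
Qed.

Lemma boxd_comb l p q x y : 0 <= l <= 1 ->
  boxd (l * fst p + (1 - l) * fst q, l * snd p + (1 - l) * snd q)
       (l * fst x + (1 - l) * fst y, l * snd x + (1 - l) * snd y)
  <= l * boxd p x + (1 - l) * boxd q y.
Proof.
  intros H. apply boxd_le; simpl.
  - replace (l * fst p + (1 - l) * fst q - (l * fst x + (1 - l) * fst y)) with
      (l * (fst p - fst x) + (1 - l) * (fst q - fst y)) by ring.
    eapply Rle_trans; [apply abs_comb; auto|].
    pose proof (boxd_fst p x); pose proof (boxd_fst q y).
    apply Rplus_le_compat; apply Rmult_le_compat_l; lra.
  - replace (l * snd p + (1 - l) * snd q - (l * snd x + (1 - l) * snd y)) with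
      (l * (snd p - snd x) + (1 - l) * (snd q - snd y)) by ring.
    eapply Rle_trans; [apply abs_comb; auto|].
    pose proof (boxd_snd p x); pose proof (boxd_snd q y).
    apply Rplus_le_compat; apply Rmult_le_compat_l; lra.
Qed.

Lemma glb_exists (S : R -> Prop) : (exists r, S r) -> (forall r, S r -> 0 <= r) ->
  exists m, is_glb S m.
Proof.
  intros [r0 Hr0] Hlb.
  destruct (completeness (fun r => S (- r))) as [m [Hm1 Hm2]].
  - exists 0. intros x Hx. apply Hlb in Hx. lra.
  - exists (- r0). now rewrite Ropp_involutive.
  - exists (- m). split.
    + intros r Hr. assert (- r <= m) by (apply Hm1; now rewrite Ropp_involutive). lra.
    + intros m' Hm'. assert (m <= - m'). { apply Hm2. intros x Hx. apply Hm' in Hx. lra. } lra.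
Qed.

Lemma glb_unique S m1 m2 : is_glb S m1 -> is_glb S m2 -> m1 = m2.
Proof. intros [A B] [C D]. apply Rle_antisym; auto. Qed.

Definition nonempty (A : R * R -> Prop) := exists y, A y.

Lemma dset_spec x A : nonempty A ->
  is_glb (fun r => exists y, A y /\ r = boxd x y) (dset x A).
Proof.
  intros [y Hy]. unfold dset. apply epsilon_spec. apply glb_exists.
  - exists (boxd x y); eauto.
  - intros r [z [_ ->]]; apply boxd_ge0.
Qed.

Lemma dset_le x A y : nonempty A -> A y -> dset x A <= boxd x y.
Proof. intros H Hy. apply (proj1 (dset_spec x A H)). eauto. Qed.

Lemma dset_ge0 x A : nonempty A -> 0 <= dset x A.
Proof. intros H. apply (proj2 (dset_spec x A H)). intros r [z [_ ->]]; apply boxd_ge0. Qed.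

Lemma dset_approx x A e : nonempty A -> 0 < e -> exists y, A y /\ boxd x y < dset x A + e.
Proof.
  intros H He. apply NNPP; intros Hn.
  assert (dset x A + e <= dset x A); [|lra].
  apply (proj2 (dset_spec x A H)). intros r [z [Hz ->]].
  apply Rnot_lt_le. intro Hl. apply Hn. eauto.
Qed.

Lemma dset_eq x A m : nonempty A -> is_glb (fun r => exists y, A y /\ r = boxd x y) m -> dset x A = m.
Proof. intros H Hm. eapply glb_unique; [apply dset_spec; auto| exact Hm]. Qed.

Lemma dset_lip x z A : nonempty A -> dset x A <= boxd x z + dset z A.
Proof.
  intros H. apply le_epsilon. intros e He.
  destruct (dset_approx z A e H He) as [y [Hy Hl]].
  pose proof (dset_le x A y H Hy). pose proof (boxd_tri x z y). lra.
Qed.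

Definition phi (f : R -> ERbar) (x : R * R) := dset x (epi f).

Lemma XM_ne f : XM f -> nonempty (epi f).
Proof.
  intros (_ & _ & _ & H0). destruct (f 0) as [v|] eqn:E; [|congruence].
  exists (0, v). unfold epi; simpl. rewrite E. lra.
Qed.

Lemma phi_ge0 f x : XM f -> 0 <= phi f x.
Proof. intros H; apply dset_ge0, XM_ne, H. Qed.

Lemma phi_lip f x z : XM f -> phi f x <= boxd x z + phi f z.
Proof. intros H; apply dset_lip, XM_ne, H. Qed.

Lemma phi_lip_abs f x z : XM f -> Rabs (phi f x - phi f z) <= boxd x z.
Proof.
  intros H. pose proof (phi_lip f x z H). pose proof (phi_lip f z x H).
  rewrite boxd_sym in H1. apply Rabs_le; lra.
Qed.

Lemma phi_zero f y : XM f -> epi f y -> phi f y = 0.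
Proof.
  intros H Hy. pose proof (dset_le y _ y (XM_ne f H) Hy). rewrite boxd_refl in H0.
  pose proof (phi_ge0 f y H). unfold phi in *; lra.
Qed.

Lemma phi_le f x y : XM f -> epi f y -> phi f x <= boxd x y.
Proof. intros H Hy; apply dset_le; auto; apply XM_ne, H. Qed.

Lemma phi_approx f x e : XM f -> 0 < e -> exists y, epi f y /\ boxd x y < phi f x + e.
Proof. intros H He; apply dset_approx; auto; apply XM_ne, H. Qed.

Lemma phi_mono f t b b' : XM f -> b <= b' -> phi f (t, b') <= phi f (t, b).
Proof.
  intros H Hb. apply le_epsilon. intros e He.
  destruct (phi_approx f (t, b) e H He) as [[s c] [Hy Hl]].
  assert (epi f (s, c + (b' - b))).
  { unfold epi in *; simpl in *. destruct (f s); auto. lra. }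
  pose proof (phi_le f (t, b') _ H H0).
  assert (boxd (t, b') (s, c + (b' - b)) = boxd (t, b) (s, c)).
  { unfold boxd; simpl. f_equal. f_equal. ring. }
  lra.
Qed.

Lemma phi_neg f t b : XM f -> - b <= phi f (t, b).
Proof.
  intros H. apply (proj2 (dset_spec (t, b) _ (XM_ne f H))).
  intros r [[s c] [Hy ->]]. destruct H as (_ & _ & Hn & _).
  unfold epi in Hy; simpl in Hy. destruct (f s) as [v|] eqn:E; [|contradiction].
  apply Hn in E. pose proof (boxd_snd (t, b) (s, c)); simpl in *.
  pose proof (Rabs_minus_sym b c). pose proof (Rle_abs (c - b)). lra.
Qed.

Lemma phi_convex f p q l : XM f -> 0 <= l <= 1 ->
  phi f (l * fst p + (1 - l) * fst q, l * snd p + (1 - l) * snd q)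
  <= l * phi f p + (1 - l) * phi f q.
Proof.
  intros H Hl. apply le_epsilon. intros e He.
  destruct (phi_approx f p e H He) as [y1 [Hy1 L1]].
  destruct (phi_approx f q e H He) as [y2 [Hy2 L2]].
  pose proof (proj1 (proj2 H) y1 y2 l Hy1 Hy2 Hl) as Hc.
  pose proof (phi_le f (l * fst p + (1 - l) * fst q, l * snd p + (1 - l) * snd q) _ H Hc).
  pose proof (boxd_comb l p q y1 y2 Hl).
  assert (l * boxd p y1 <= l * (phi f p + e)) by (apply Rmult_le_compat_l; lra).
  assert ((1 - l) * boxd q y2 <= (1 - l) * (phi f q + e)) by (apply Rmult_le_compat_l; lra).
  lra.
Qed.

Lemma phi_01 f : Kset f -> phi f (0, 1) = 0.
Proof.
  intros [H [v [E Hv]]]. apply phi_zero; auto. unfold epi; simpl. rewrite E; lra.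
Qed.

Lemma phi_bound f x : Kset f -> phi f x <= boxd x (0, 1).
Proof.
  intros [H [v [E Hv]]]. apply phi_le; auto. unfold epi; simpl. rewrite E; lra.
Qed.


Lemma ball0 k : ball k (0, 0).
Proof. unfold ball; rewrite boxd_refl; apply pos_INR. Qed.

Lemma ball_mono k m x : (k <= m)%nat -> ball k x -> ball m x.
Proof. unfold ball; intros H Hx. apply le_INR in H; lra. Qed.

Lemma bound_ball x k : ball k x -> boxd x (0, 1) <= INR k + 1.
Proof.
  unfold ball; intros H. pose proof (boxd_tri x (0,0) (0,1)).
  rewrite boxd_sym in H. assert (boxd (0,0) (0,1) = 1).
  { unfold boxd; simpl. rewrite Rminus_diag, Rabs_R0. rewrite (Rabs_left (0 - 1)) by lra.
    unfold Rmax; destruct Rle_dec; lra. }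
  lra.
Qed.

Lemma AW_spec k f g : Kset f -> Kset g ->
  is_lub (fun r => exists x, ball k x /\ r = Rabs (phi g x - phi f x)) (AWdev k f g).
Proof.
  intros Hf Hg. unfold AWdev. apply epsilon_spec.
  destruct (completeness (fun r => exists x, ball k x /\ r = Rabs (phi g x - phi f x))) as [m Hm].
  - exists (INR k + 1). intros r [x [Hx ->]].
    pose proof (bound_ball x k Hx).
    pose proof (phi_bound f x Hf); pose proof (phi_bound g x Hg).
    pose proof (phi_ge0 f x (proj1 Hf)); pose proof (phi_ge0 g x (proj1 Hg)).
    apply Rabs_le; lra.
  - exists (Rabs (phi g (0,0) - phi f (0,0))). exists (0,0). split; auto. apply ball0.
  - exists m; exact Hm.
Qed.

Definition D k f g := AWdev k f g.

Lemma D1 k f g x : Kset f -> Kset g -> ball k x -> Rabs (phi g x - phi f x) <= D k f g.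
Proof. intros Hf Hg Hx. apply (proj1 (AW_spec k f g Hf Hg)). eauto. Qed.

Lemma D2 k f g e : Kset f -> Kset g ->
  (forall x, ball k x -> Rabs (phi g x - phi f x) <= e) -> D k f g <= e.
Proof. intros Hf Hg H. apply (proj2 (AW_spec k f g Hf Hg)). intros r [x [Hx ->]]; auto. Qed.

Lemma D_sym k f g : Kset f -> Kset g -> D k f g <= D k g f.
Proof. intros Hf Hg. apply D2; auto. intros x Hx. rewrite Rabs_minus_sym. apply D1; auto. Qed.

Lemma D_tri k f g h : Kset f -> Kset g -> Kset h -> D k f h <= D k f g + D k g h.
Proof.
  intros Hf Hg Hh. apply D2; auto. intros x Hx.
  replace (phi h x - phi f x) with ((phi g x - phi f x) + (phi h x - phi g x)) by ring.
  eapply Rle_trans; [apply Rabs_triang|].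
  apply Rplus_le_compat; apply D1; auto.
Qed.

Lemma D_mono k m f g : Kset f -> Kset g -> (k <= m)%nat -> D k f g <= D m f g.
Proof.
  intros Hf Hg Hkm. apply D2; auto. intros x Hx. apply D1; auto. eapply ball_mono; eauto.
Qed.


Lemma FIN (A : Type) (P : A -> Prop) (F : A -> list nat) (codes : list (list nat)) :
  exists L, (forall c, In c L -> P c) /\
    forall a, P a -> In (F a) codes -> exists c, In c L /\ F c = F a.
Proof.
  induction codes as [|w ws IH].
  - exists nil. split; [intros c []|]. intros a _ [].
  - destruct IH as [L [HL1 HL2]].
    destruct (classic (exists a, P a /\ F a = w)) as [[a0 [Pa0 Fa0]]|Hn].
    + exists (a0 :: L). split.
      * intros c [<-|Hc]; auto.
      * intros a Pa [Ha|Ha].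
        -- exists a0. split; [left; auto| congruence].
        -- destruct (HL2 a Pa Ha) as [c [? ?]]. exists c; split; auto; right; auto.
    + exists L. split; auto. intros a Pa [Ha|Ha].
      * exfalso; apply Hn; eauto.
      * auto.
Qed.

Fixpoint allcodes (n N : nat) : list (list nat) :=
  match n with
  | O => nil :: nil
  | S n' => flat_map (fun j => map (cons j) (allcodes n' N)) (seq 0 (S N))
  end.

Lemma allcodes_in n N l : length l = n -> (forall j, In j l -> (j <= N)%nat) -> In l (allcodes n N).
Proof.
  revert l. induction n as [|n IH]; intros l Hl Hj.
  - destruct l; simpl in *; [auto| lia].
  - destruct l as [|j l]; simpl in Hl; [lia|]. cbn [allcodes].
    apply in_flat_map. exists j. split.
    + apply in_seq. assert (j <= N)%nat by (apply Hj; left; auto). lia.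
    + apply in_map. apply IH; [lia|]. intros j' H'. apply Hj. right; auto.
Qed.

Lemma nat_net n s : 0 <= s <= INR n -> exists i, (i <= n)%nat /\ Rabs (s - INR i) <= 1.
Proof.
  induction n as [|n IH]; intros Hs.
  - exists O. split; auto. simpl in *. rewrite Rminus_0_r, Rabs_right; lra.
  - destruct (Rle_dec s (INR n)) as [H|H].
    + destruct (IH (conj (proj1 Hs) H)) as [i [Hi Ha]]. exists i; split; auto.
    + exists (S n). split; auto. rewrite S_INR in *. apply Rabs_le; lra.
Qed.

Lemma abs_inv a b : Rabs a <= b -> - b <= a <= b.
Proof. intros H. pose proof (Rle_abs a). pose proof (Rle_abs (- a)). rewrite Rabs_Ropp in H1. lra. Qed.

Definition net1 (m p : nat) : list R :=
  map (fun i => - INR m + INR i / INR p) (seq 0 (S (2 * m * p))).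

Lemma net1_spec m p t : (0 < p)%nat -> Rabs t <= INR m ->
  exists a, In a (net1 m p) /\ Rabs (t - a) <= / INR p.
Proof.
  intros Hp Ht. assert (HP : 0 < INR p) by (apply lt_0_INR; lia).
  destruct (nat_net (2 * m * p) ((t + INR m) * INR p)) as [i [Hi Ha]].
  - rewrite !mult_INR. simpl. apply abs_inv in Ht. split.
    + apply Rmult_le_pos; lra.
    + assert ((t + INR m) <= (1 + 1) * INR m) by lra.
      apply Rmult_le_compat_r; lra.
  - exists (- INR m + INR i / INR p). split.
    + unfold net1. apply (in_map (fun i => - INR m + INR i / INR p)). apply in_seq. lia.
    + replace (t - (- INR m + INR i / INR p)) with (((t + INR m) * INR p - INR i) * / INR p)
        by (field; lra).
      rewrite Rabs_mult, (Rabs_right (/ INR p)) by (apply Rle_ge, Rlt_le, Rinv_0_lt_compat; lra).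
      pattern (/ INR p) at 2; rewrite <- Rmult_1_l.
      apply Rmult_le_compat_r; [apply Rlt_le, Rinv_0_lt_compat; lra| auto].
Qed.

Lemma net1_bound m p a : (0 < p)%nat -> In a (net1 m p) -> Rabs a <= INR m.
Proof.
  intros Hp Ha. assert (HP : 0 < INR p) by (apply lt_0_INR; lia).
  unfold net1 in Ha. apply in_map_iff in Ha. destruct Ha as [i [<- Hi]].
  apply in_seq in Hi. assert (Hi' : (i <= 2 * m * p)%nat) by lia.
  apply le_INR in Hi'. rewrite !mult_INR in Hi'. simpl in Hi'.
  assert (0 <= INR i / INR p) by (apply Rmult_le_pos; [apply pos_INR| apply Rlt_le, Rinv_0_lt_compat; lra]).
  assert (INR i / INR p <= (1 + 1) * INR m).
  { apply (Rmult_le_reg_r (INR p)); auto. unfold Rdiv. rewrite Rmult_assoc, Rinv_l by lra. lra. }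
  apply Rabs_le; lra.
Qed.

Definition grid m p : list (R * R) :=
  flat_map (fun a => map (fun b => (a, b)) (net1 m p)) (net1 m p).

Lemma grid_spec m p x : (0 < p)%nat -> ball m x -> exists g, In g (grid m p) /\ boxd x g <= / INR p.
Proof.
  intros Hp Hx. unfold ball in Hx.
  pose proof (boxd_fst (0,0) x); pose proof (boxd_snd (0,0) x). simpl in H, H0.
  rewrite Rminus_0_l, Rabs_Ropp in H, H0.
  destruct (net1_spec m p (fst x) Hp) as [a [Ha Ha']]; [lra|].
  destruct (net1_spec m p (snd x) Hp) as [b [Hb Hb']]; [lra|].
  exists (a, b). split.
  - unfold grid. apply (proj2 (in_flat_map _ _ _)). exists a. split; auto. apply (in_map (fun b => (a, b))). auto.
  - apply boxd_le; simpl; auto.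
Qed.

Lemma grid_ball m p g : (0 < p)%nat -> In g (grid m p) -> ball m g.
Proof.
  intros Hp Hg. unfold grid in Hg. apply in_flat_map in Hg. destruct Hg as [a [Ha Hg]].
  apply in_map_iff in Hg. destruct Hg as [b [<- Hb]].
  unfold ball. apply boxd_le; simpl; rewrite Rminus_0_l, Rabs_Ropp; eapply net1_bound; eauto.
Qed.

Definition qz (p : nat) (v : R) : nat := Z.to_nat (up (v * INR p)).

Lemma up_pos r : 0 <= r -> (0 < up r)%Z.
Proof. intros H. destruct (archimed r) as [A _]. apply lt_IZR. simpl. lra. Qed.

Lemma qz_eq p v w : (0 < p)%nat -> 0 <= v -> 0 <= w -> qz p v = qz p w -> Rabs (v - w) < / INR p.
Proof.
  intros Hp Hv Hw H. assert (HP : 0 < INR p) by (apply lt_0_INR; lia).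
  unfold qz in H.
  assert (0 <= v * INR p) by (apply Rmult_le_pos; lra).
  assert (0 <= w * INR p) by (apply Rmult_le_pos; lra).
  pose proof (up_pos _ H0). pose proof (up_pos _ H1).
  assert (E : up (v * INR p) = up (w * INR p)) by lia.
  destruct (archimed (v * INR p)) as [A1 A2]. destruct (archimed (w * INR p)) as [B1 B2].
  rewrite E in A1, A2.
  assert (Rabs (v * INR p - w * INR p) < 1) by (apply Rabs_def1; lra).
  replace (v - w) with ((v * INR p - w * INR p) * / INR p) by (field; lra).
  rewrite Rabs_mult, (Rabs_right (/ INR p)) by (apply Rle_ge, Rlt_le, Rinv_0_lt_compat; lra).
  pattern (/ INR p) at 2; rewrite <- Rmult_1_l.
  apply Rmult_lt_compat_r; [apply Rinv_0_lt_compat; lra| auto].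
Qed.

Lemma qz_bound p v B : (0 < p)%nat -> 0 <= v -> v <= B -> (qz p v <= qz p B)%nat.
Proof.
  intros Hp Hv HB. assert (HP : 0 < INR p) by (apply lt_0_INR; lia).
  unfold qz.
  destruct (archimed (v * INR p)) as [A1 A2]. destruct (archimed (B * INR p)) as [B1 B2].
  assert (v * INR p <= B * INR p) by (apply Rmult_le_compat_r; lra).
  assert (up (v * INR p) < up (B * INR p) + 1)%Z.
  { apply lt_IZR. rewrite plus_IZR. simpl. lra. }
  lia.
Qed.

Lemma map_eq_in {A B} (h1 h2 : A -> B) l x : map h1 l = map h2 l -> In x l -> h1 x = h2 x.
Proof.
  induction l as [|a l IH]; simpl; intros H Hx; [contradiction|].
  injection H; intros H1 H2. destruct Hx as [<-|Hx]; auto.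
Qed.

Lemma TB m r : 0 < r -> exists L, (forall c, In c L -> Kset c) /\
  forall f, Kset f -> exists c, In c L /\ D m c f < r.
Proof.
  intros Hr. destruct (archimed_cor1 (r / 4)) as [p [Hp1 Hp]]; [lra|].
  assert (HP : 0 < INR p) by (apply lt_0_INR; lia).
  set (G := grid m p).
  set (F := fun f => map (fun g => qz p (phi f g)) G).
  destruct (FIN _ Kset F (allcodes (length G) (qz p (INR m + 1)))) as [L [HL1 HL2]].
  exists L. split; auto. intros f Hf.
  destruct (HL2 f Hf) as [c [Hc HFc]].
  { apply allcodes_in.
    - unfold F. apply length_map.
    - intros j Hj. unfold F in Hj. apply in_map_iff in Hj. destruct Hj as [g [<- Hg]].
      apply qz_bound; auto. apply phi_ge0, Hf.
      eapply Rle_trans; [apply phi_bound; auto|]. apply bound_ball. eapply grid_ball; eauto. }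
  exists c. split; auto. pose proof (HL1 c Hc) as Kc.
  apply Rle_lt_trans with (3 * / INR p); [|lra].
  apply D2; auto. intros x Hx.
  destruct (grid_spec m p x Hp Hx) as [g [Hg Hxg]].
  assert (Rabs (phi f g - phi c g) < / INR p).
  { apply qz_eq; auto; try apply phi_ge0; try apply Hf; try apply Kc.
    symmetry. exact (map_eq_in _ _ G g HFc Hg). }
  pose proof (phi_lip_abs f x g (proj1 Hf)). pose proof (phi_lip_abs c x g (proj1 Kc)).
  replace (phi f x - phi c x) with ((phi f x - phi f g) + (phi f g - phi c g) + (phi c g - phi c x)) by ring.
  eapply Rle_trans; [apply Rabs_triang|]. eapply Rle_trans; [apply Rplus_le_compat_r, Rabs_triang|].
  rewrite (Rabs_minus_sym (phi c g)). lra.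
Qed.


Lemma LIM (u : nat -> R) l a c N : Un_cv u l -> (forall n, (n >= N)%nat -> Rabs (a - u n) <= c) ->
  Rabs (a - l) <= c.
Proof.
  intros Hu H. apply le_epsilon. intros d Hd.
  destruct (Hu d Hd) as [M HM]. specialize (HM (max N M) ltac:(lia)).
  specialize (H (max N M) ltac:(lia)). unfold Rdist in HM.
  replace (a - l) with ((a - u (max N M)) + (u (max N M) - l)) by ring.
  eapply Rle_trans; [apply Rabs_triang|]. lra.
Qed.

Lemma cv_exists (u : nat -> R) : Cauchy_crit u -> exists l, Un_cv u l.
Proof. intros H. destruct (R_complete u H) as [l Hl]; eauto. Qed.

Definition ee (eps : R) (j : nat) := eps * (/ 2) ^ j.

Lemma ee_pos eps j : 0 < eps -> 0 < ee eps j.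
Proof. intros H. unfold ee. apply Rmult_lt_0_compat; auto. apply pow_lt. lra. Qed.

Lemma ee_S eps j : ee eps (S j) = ee eps j / 2.
Proof. unfold ee. simpl. field. Qed.

Lemma ee_mono eps j k : 0 < eps -> ee eps (j + k) <= ee eps j.
Proof.
  intros H. induction k as [|k IH]. rewrite Nat.add_0_r; lra.
  rewrite Nat.add_succ_r, ee_S. pose proof (ee_pos eps (j + k) H). lra.
Qed.

Lemma ee_small eps d : 0 < eps -> 0 < d -> exists N, forall n, (n >= N)%nat -> ee eps n < d.
Proof.
  intros H Hd. destruct (pow_lt_1_zero (/ 2)) with (y := d / eps) as [N HN].
  - rewrite Rabs_right; lra.
  - apply Rdiv_lt_0_compat; auto.
  - exists N. intros n Hn. specialize (HN n Hn). unfold ee.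
    rewrite Rabs_right in HN by (apply Rle_ge, pow_le; lra).
    apply (Rmult_lt_compat_l eps) in HN; auto. replace (eps * (d / eps)) with d in HN by (field; lra). lra.
Qed.

Lemma ZP (ph : R * R -> R) :
  (forall x, 0 <= ph x) ->
  (forall x y, ph x <= boxd x y + ph y) ->
  (forall x e, 0 < e -> exists y, ph y <= e /\ boxd x y <= ph x + e) ->
  forall x e, 0 < e -> exists y, ph y = 0 /\ boxd x y <= ph x + e.
Proof.
  intros H0 Hl NZ x eps Heps.
  set (nxt := fun z e => epsilon (inhabits (0, 0)) (fun y => ph y <= e /\ boxd z y <= ph z + e)).
  assert (Hnxt : forall z e, 0 < e -> ph (nxt z e) <= e /\ boxd z (nxt z e) <= ph z + e).
  { intros z e He. unfold nxt. apply epsilon_spec. apply NZ; auto. }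
  set (e := ee (eps / 5)).
  assert (He : forall j, 0 < e j) by (intros; apply ee_pos; lra).
  set (Y := fix Y (j : nat) := match j with O => nxt x (e O) | S j => nxt (Y j) (e (S j)) end).
  assert (HY1 : forall j, ph (Y j) <= e j).
  { intros [|j]; simpl; apply Hnxt; auto. }
  assert (HY2 : forall j, boxd (Y j) (Y (S j)) <= 4 * e j - 4 * e (S j)).
  { intros j. pose proof (proj2 (Hnxt (Y j) (e (S j)) (He (S j)))) as A.
    change (Y (S j)) with (nxt (Y j) (e (S j))).
    assert (E : e (S j) = e j / 2) by apply ee_S.
    pose proof (HY1 j). pose proof (He j). rewrite E in *. lra. }
  assert (HC : forall j k : nat, boxd (Y j) (Y (j + k)%nat) <= 4 * e j - 4 * e (j + k)%nat).
  { intros j k. induction k as [|k IH].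
    - rewrite Nat.add_0_r, boxd_refl. lra.
    - rewrite Nat.add_succ_r. eapply Rle_trans; [apply (boxd_tri _ (Y (j + k)%nat))|].
      specialize (HY2 (j + k)%nat). lra. }
  assert (HC' : forall n m, (n <= m)%nat -> boxd (Y n) (Y m) <= 4 * e n).
  { intros n m Hnm. replace m with (n + (m - n))%nat by lia. specialize (HC n (m - n)%nat).
    pose proof (He ((n + (m - n))%nat)). lra. }
  assert (Hcau : forall (pr : R * R -> R), (forall a b, Rabs (pr a - pr b) <= boxd a b) ->
      exists l, Un_cv (fun n => pr (Y n)) l /\ forall j, Rabs (pr (Y j) - l) <= 4 * e j).
  { intros pr Hpr.
    assert (Hc : Cauchy_crit (fun n => pr (Y n))).
    { intros d Hd. destruct (ee_small (eps / 5) (d / 4)) as [N HN]; try lra.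
      exists N. intros n m Hn Hm. unfold Rdist.
      assert (forall n, (n >= N)%nat -> e n < d / 4) by (intros; apply HN; auto).
      destruct (Nat.le_ge_cases n m) as [Hnm|Hnm].
      + specialize (HC' n m Hnm). specialize (Hpr (Y n) (Y m)). specialize (H n Hn). lra.
      + specialize (HC' m n Hnm). specialize (Hpr (Y m) (Y n)). specialize (H m Hm).
        rewrite Rabs_minus_sym in Hpr. lra. }
    destruct (cv_exists _ Hc) as [l Hl0]. exists l. split; auto.
    intros j. apply (LIM _ _ _ _ j Hl0). intros n Hn. apply Rle_trans with (boxd (Y j) (Y n)); auto. }
  destruct (Hcau fst) as [ya [Ha1 Ha2]]. { intros; apply boxd_fst. }
  destruct (Hcau snd) as [yb [Hb1 Hb2]]. { intros; apply boxd_snd. }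
  assert (HYy : forall j, boxd (Y j) (ya, yb) <= 4 * e j).
  { intros j. apply boxd_le; simpl; auto. }
  exists (ya, yb). split.
  - apply Rle_antisym; [|apply H0]. apply le_epsilon. intros d Hd.
    destruct (ee_small (eps / 5) (d / 5)) as [N HN]; try lra.
    specialize (HN N (le_n _)). specialize (Hl (ya, yb) (Y N)). rewrite boxd_sym in Hl.
    specialize (HYy N). specialize (HY1 N). unfold e in *. lra.
  - eapply Rle_trans; [apply (boxd_tri _ (Y O))|].
    pose proof (proj2 (Hnxt x (e O) (He O))). specialize (HYy O). simpl in H.
    unfold e, ee in *. simpl in *. lra.
Qed.


Definition epiv (E : ERbar) (b : R) : Prop := match E with Fin v => v <= b | PInf => False end.

Lemma LIMF (ph : R * R -> R) :
  (forall x, 0 <= ph x) ->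
  (forall x y, ph x <= boxd x y + ph y) ->
  (forall t b b', b <= b' -> ph (t, b') <= ph (t, b)) ->
  (forall t b, - b <= ph (t, b)) ->
  (forall p q l, 0 <= l <= 1 ->
     ph (l * fst p + (1 - l) * fst q, l * snd p + (1 - l) * snd q) <= l * ph p + (1 - l) * ph q) ->
  ph (0, 1) = 0 ->
  (forall x e, 0 < e -> exists y, ph y = 0 /\ boxd x y <= ph x + e) ->
  exists f, Kset f /\ forall x, phi f x = ph x.
Proof.
  intros H0 Hl Hm Hn Hc H01 HZ.
  assert (Hex : forall t, exists E, forall b, epiv E b <-> ph (t, b) = 0).
  { intros t. destruct (classic (exists b, ph (t, b) = 0)) as [[b0 Hb0]|Hno].
    - destruct (glb_exists (fun b => ph (t, b) = 0)) as [v [Hv1 Hv2]].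
      + eauto.
      + intros r Hr. pose proof (Hn t r). lra.
      + exists (Fin v). intros b. simpl. split.
        * intros Hvb. apply Rle_antisym; [|apply H0]. apply le_epsilon. intros d Hd.
          assert (exists b', ph (t, b') = 0 /\ b' < v + d) as [b' [Hb' Hb'2]].
          { apply NNPP; intros Hno. assert (v + d <= v); [|lra].
            apply Hv2. intros r Hr. apply Rnot_lt_le. intros Hlt. apply Hno; eauto. }
          destruct (Rle_dec b' b).
          -- pose proof (Hm t b' b r). lra.
          -- pose proof (Hl (t, b) (t, b')). assert (boxd (t, b) (t, b') <= d).
             { apply boxd_le; simpl; [rewrite Rminus_diag, Rabs_R0; lra|].
               rewrite Rabs_left by lra. lra. }
             lra.
        * intros Hz. apply Hv1. auto.
    - exists PInf. intros b. simpl. split; [tauto|]. intros Hz; apply Hno; eauto. }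
  set (f := fun t => epsilon (inhabits PInf) (fun E => forall b, epiv E b <-> ph (t, b) = 0)).
  assert (Hf : forall p, epi f p <-> ph p = 0).
  { intros [t b]. unfold epi. simpl.
    pose proof (epsilon_spec (inhabits PInf) (fun E => forall b, epiv E b <-> ph (t, b) = 0) (Hex t)) as S.
    specialize (S b). fold (f t) in S. destruct (f t); simpl in *; auto. }
  assert (XMf : XM f).
  { split; [|split; [|split]].
    - intros t a Ha. assert (Hnz : ph (t, a) <> 0).
      { intros Hz. apply Hf in Hz. unfold epi in Hz; simpl in Hz. destruct (f t); simpl in *; lra. }
      pose proof (H0 (t, a)). exists (ph (t, a)). split; [lra|].
      intros s Hs. destruct (f s) as [v|] eqn:E; simpl; auto.
      apply Rnot_le_lt. intros Hva. assert (epi f (s, a)) by (unfold epi; simpl; rewrite E; auto).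
      apply Hf in H1. pose proof (Hl (t, a) (s, a)).
      assert (boxd (t, a) (s, a) < ph (t, a)).
      { unfold boxd; simpl. rewrite Rminus_diag, Rabs_R0, Rabs_minus_sym.
        unfold Rmax; destruct Rle_dec; lra. }
      lra.
    - intros p q l Hp Hq Hl01. apply Hf. apply Hf in Hp. apply Hf in Hq.
      pose proof (Hc p q l Hl01). rewrite Hp, Hq in H. pose proof (H0 (l * fst p + (1 - l) * fst q, l * snd p + (1 - l) * snd q)). lra.
    - intros t v E. assert (epi f (t, v)) by (unfold epi; simpl; rewrite E; lra).
      apply Hf in H. pose proof (Hn t v). lra.
    - intros E. assert (epi f (0, 1)) by (apply Hf; auto). unfold epi in H; simpl in H. rewrite E in H. auto. }
  exists f. split.
  - split; auto. assert (epi f (0, 1)) by (apply Hf; auto). unfold epi in H; simpl in H.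
    destruct (f 0) as [v|]; [exists v; split; auto| contradiction].
  - intros x. unfold phi. apply dset_eq; [apply XM_ne; auto|]. split.
    + intros r [y [Hy ->]]. apply Hf in Hy. pose proof (Hl x y). lra.
    + intros m' Hm'. apply le_epsilon. intros e He. destruct (HZ x e He) as [y [Hy Hxy]].
      assert (m' <= boxd x y) by (apply Hm'; exists y; split; auto; apply Hf; auto). lra.
Qed.


Definition FC (I : Type) (U : I -> (R -> ERbar) -> Prop) (S : (R -> ERbar) -> Prop) :=
  exists l : list I, forall f, S f -> exists i, In i l /\ U i f.

Definition rr (m : nat) := / (INR m + 1).

Lemma rr_pos m : 0 < rr m.
Proof. unfold rr. apply Rinv_0_lt_compat. pose proof (pos_INR m). lra. Qed.

Lemma rr_mono m m' : (m <= m')%nat -> rr m' <= rr m.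
Proof.
  intros H. unfold rr. apply le_INR in H. pose proof (pos_INR m).
  apply Rinv_le_contravar; lra.
Qed.

Lemma rr_small d : 0 < d -> exists N, forall m, (m >= N)%nat -> rr m < d.
Proof.
  intros Hd. destruct (archimed_cor1 d Hd) as [N [HN HN0]]. exists N. intros m Hm.
  apply Rle_lt_trans with (/ INR N); auto. unfold rr. apply Rinv_le_contravar.
  apply lt_0_INR; lia. apply le_INR in Hm. lra.
Qed.

Lemma ball_ev x : exists N, forall m, (m >= N)%nat -> ball m x.
Proof.
  destruct (INR_unbounded (boxd (0,0) x)) as [N HN]. exists N. intros m Hm.
  apply (ball_mono N); auto. unfold ball; lra.
Qed.

Definition zf : R -> ERbar := fun _ => PInf.

Definition nextc I U (m : nat) (S : (R -> ERbar) -> Prop) :=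
  epsilon (inhabits zf) (fun c => Kset c /\ ~ FC I U (fun g => S g /\ D m c g < rr m)).

Fixpoint Pre I U (m : nat) : (R -> ERbar) -> Prop :=
  match m with
  | O => Kset
  | S m' => fun g => Pre I U m' g /\ D m' (nextc I U m' (Pre I U m')) g < rr m'
  end.

Lemma step I U m (S : (R -> ERbar) -> Prop) : (forall f, S f -> Kset f) -> ~ FC I U S ->
  exists c, Kset c /\ ~ FC I U (fun g => S g /\ D m c g < rr m).
Proof.
  intros HS HnS. destruct (TB m (rr m) (rr_pos m)) as [L [HL1 HL2]].
  apply NNPP. intros Hno.
  assert (Hall : forall c, In c L -> FC I U (fun g => S g /\ D m c g < rr m)).
  { intros c Hc. apply NNPP. intros Hn. apply Hno. exists c; split; auto. }
  apply HnS. clear HL1 Hno.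
  assert (Hcomb : forall L', (forall c, In c L' -> FC I U (fun g => S g /\ D m c g < rr m)) ->
     FC I U (fun g => S g /\ exists c, In c L' /\ D m c g < rr m)).
  { induction L' as [|c L' IH]; intros H.
    - exists nil. intros f [_ [c [[] _]]].
    - assert (IH' : FC I U (fun g => S g /\ exists c, In c L' /\ D m c g < rr m)) by (apply IH; intros; apply H; right; auto).
      destruct IH' as [l2 Hl2].
      destruct (H c (or_introl eq_refl)) as [l1 Hl1].
      exists (l1 ++ l2). intros f [Sf [c' [[<-|Hc'] Hd]]].
      + destruct (Hl1 f (conj Sf Hd)) as [i [Hi Ui]]. exists i; split; auto. apply in_or_app; auto.
      + destruct (Hl2 f (conj Sf (ex_intro _ c' (conj Hc' Hd)))) as [i [Hi Ui]].
        exists i; split; auto. apply in_or_app; auto. }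
  destruct (Hcomb L Hall) as [l Hl]. exists l. intros f Sf.
  destruct (HL2 f (HS f Sf)) as [c [Hc Hd]]. apply Hl. split; [exact Sf|]. exists c. split; assumption.
Qed.

Lemma Pre_inv I U m : ~ FC I U Kset -> (forall f, Pre I U m f -> Kset f) /\ ~ FC I U (Pre I U m).
Proof.
  intros H0. induction m as [|m [IH1 IH2]].
  - split; auto.
  - pose proof (epsilon_spec (inhabits zf) _ (step I U m (Pre I U m) IH1 IH2)) as [Hc Hn].
    split.
    + intros f [Hf _]. auto.
    + exact Hn.
Qed.

Lemma Pre_dec I U m k g : Pre I U (m + k) g -> Pre I U m g.
Proof. induction k as [|k IH]; rewrite ?Nat.add_0_r, ?Nat.add_succ_r; simpl; intros H; [auto| apply IH; tauto]. Qed.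

Lemma cv_const c : Un_cv (fun _ => c) c.
Proof. intros e He. exists O. intros n _. unfold Rdist. rewrite Rminus_diag, Rabs_R0. lra. Qed.

Lemma main_contra I U : (forall i, AWopen (U i)) -> (forall f, Kset f -> exists i, U i f) ->
  ~ FC I U Kset -> False.
Proof.
  intros Hopen Hcov HnK.
  set (P := Pre I U).
  set (cen := fun m => nextc I U m (P m)).
  assert (Hinv : forall m, (forall f, P m f -> Kset f) /\ ~ FC I U (P m)) by (intros; apply Pre_inv; auto).
  assert (Hcen : forall m, Kset (cen m)).
  { intros m. destruct (Hinv m) as [A B].
    exact (proj1 (epsilon_spec (inhabits zf) _ (step I U m (P m) A B))). }
  set (fs := fun m => epsilon (inhabits zf) (P (S m))).
  assert (Hfs : forall m, P (S m) (fs m)).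
  { intros m. unfold fs. apply epsilon_spec. apply NNPP; intros Hn. apply (proj2 (Hinv (S m))).
    exists nil. intros f Hf. exfalso; apply Hn; eauto. }
  assert (Kfs : forall m, Kset (fs m)) by (intros m; apply (proj1 (Hinv (S m))), Hfs).
  assert (HB : forall m g, P (S m) g -> D m (cen m) g < rr m) by (intros m g [_ H]; exact H).
  assert (Hsub : forall m m' g, (m <= m')%nat -> P m' g -> P m g).
  { intros m m' g Hm Hg. replace m' with (m + (m' - m))%nat in Hg by lia. exact (Pre_dec I U m (m' - m) g Hg). }
  assert (HPK : forall m g, P m g -> Kset g) by (intros m; apply Hinv).
  assert (Hclose : forall m g h, P (S m) g -> P (S m) h -> D m g h < 2 * rr m).
  { intros m g h Hg Hh. pose proof (D_tri m g (cen m) h (HPK _ _ Hg) (Hcen m) (HPK _ _ Hh)).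
    pose proof (D_sym m g (cen m) (HPK _ _ Hg) (Hcen m)).
    pose proof (HB m g Hg). pose proof (HB m h Hh). lra. }
  assert (Hpt : forall m m' x, (m <= m')%nat -> ball m x ->
      Rabs (phi (fs m') x - phi (fs m) x) < 2 * rr m).
  { intros m m' x Hm Hx. eapply Rle_lt_trans; [apply D1; eauto|].
    apply Hclose; auto. apply (Hsub (S m) (S m')); [lia| auto]. }
  set (u := fun x m => phi (fs m) x).
  assert (Hcv : forall x, exists l, Un_cv (u x) l).
  { intros x. apply cv_exists. intros d Hd.
    destruct (ball_ev x) as [N1 HN1]. destruct (rr_small (d / 2)) as [N2 HN2]; [lra|].
    exists (max N1 N2). intros n m Hn Hm. unfold Rdist, u.
    destruct (Nat.le_ge_cases n m) as [Hnm|Hnm].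
    - pose proof (Hpt n m x Hnm (HN1 n ltac:(lia))). pose proof (HN2 n ltac:(lia)).
      rewrite Rabs_minus_sym. lra.
    - pose proof (Hpt m n x Hnm (HN1 m ltac:(lia))). pose proof (HN2 m ltac:(lia)). lra. }
  set (ph := fun x => epsilon (inhabits 0) (fun l => Un_cv (u x) l)).
  assert (Hph : forall x, Un_cv (u x) (ph x)) by (intros x; apply epsilon_spec, Hcv).
  assert (HU : forall m x, ball m x -> Rabs (u x m - ph x) <= 2 * rr m).
  { intros m x Hx. apply (LIM _ _ _ _ m (Hph x)). intros n Hn.
    unfold u. rewrite Rabs_minus_sym. left. apply Hpt; auto. }
  assert (XMfs : forall m, XM (fs m)) by (intros; apply Kfs).
  assert (H0ph : forall x, 0 <= ph x).
  { intros x. apply (@Rle_cv_lim (fun _ => 0) (u x) 0 (ph x)); [intros; apply phi_ge0; auto| apply cv_const| auto]. }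
  assert (Hlph : forall x y, ph x <= boxd x y + ph y).
  { intros x y. apply (@Rle_cv_lim (u x) (fun n => boxd x y + u y n) (ph x) (boxd x y + ph y)); auto.
    + intros; apply phi_lip; auto.
    + apply CV_plus; [apply cv_const| auto]. }
  destruct (LIMF ph) as [fl [Kfl Hfl]]; auto.
  - intros t b b' Hb. apply (@Rle_cv_lim (u (t, b')) (u (t, b)) (ph (t, b')) (ph (t, b))); auto.
    intros; apply phi_mono; auto.
  - intros t b. apply (@Rle_cv_lim (fun _ => - b) (u (t, b)) (- b) (ph (t, b))); auto.
    + intros; apply phi_neg; auto.
    + apply cv_const.
  - intros p q l Hl. apply (@Rle_cv_lim (u (l * fst p + (1 - l) * fst q, l * snd p + (1 - l) * snd q))
       (fun n => l * u p n + (1 - l) * u q n) _ (l * ph p + (1 - l) * ph q)); auto.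
    + intros; apply phi_convex; auto.
    + apply CV_plus; apply CV_mult; auto; apply cv_const.
  - assert (Un_cv (u (0, 1)) 0).
    { intros e He. exists O. intros n _. unfold Rdist, u. rewrite phi_01 by auto.
      rewrite Rminus_diag, Rabs_R0; lra. }
    apply (UL_sequence (u (0, 1))); auto.
  - apply ZP; auto. intros x e He.
    destruct (INR_unbounded (boxd (0,0) x + ph x + e + 1)) as [N1 HN1].
    destruct (rr_small (e / 3)) as [N2 HN2]; [lra|].
    set (m := max N1 N2).
    assert (HmN1 : INR N1 <= INR m) by (apply le_INR; lia).
    pose proof (HN2 m ltac:(lia)) as Hrm.
    assert (Hxm : ball m x) by (unfold ball; pose proof (H0ph x); lra).
    destruct (phi_approx (fs m) x (e / 3) (XMfs m) ltac:(lra)) as [y [Hy Hxy]].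
    pose proof (HU m x Hxm). unfold u in H. apply abs_inv in H.
    assert (Hym : ball m y).
    { unfold ball. pose proof (boxd_tri (0,0) x y). pose proof (H0ph x). lra. }
    pose proof (HU m y Hym). unfold u in H0. rewrite (phi_zero (fs m) y (XMfs m) Hy) in H0.
    apply abs_inv in H0.
    exists y. split; lra.
  - destruct (Hcov fl Kfl) as [i Ui].
    destruct (Hopen i fl (proj1 Kfl) Ui) as [k [Hk1 Hk]].
    apply (proj2 (Hinv (S (4 * k)))). exists (i :: nil). intros g Hg.
    exists i. split; [left; auto|]. set (m := (4 * k)%nat) in *.
    pose proof (HPK _ _ Hg) as Kg.
    apply Hk; [apply Kg|]. unfold Vk. fold (D k fl g).
    assert (Hflm : D m (fs m) fl <= 2 * rr m).
    { apply D2; auto. intros x Hx. rewrite Hfl. rewrite Rabs_minus_sym. apply HU; auto. }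
    pose proof (D_mono k m fl g Kfl Kg ltac:(lia)).
    pose proof (D_tri m fl (fs m) g Kfl (Kfs m) Kg).
    pose proof (D_sym m fl (fs m) Kfl (Kfs m)).
    pose proof (Hclose m (fs m) g (Hfs m) Hg).
    assert (4 * rr m < 1 / INR k).
    { unfold rr, m. rewrite mult_INR. simpl.
      assert (1 <= INR k) by (apply (le_INR 1); auto).
      replace (1 + 1 + 1 + 1) with 4 by ring.
      apply (Rmult_lt_reg_r (INR k * (4 * INR k + 1))). nra.
      field_simplify; try lra. }
    lra.
Qed.

Theorem mainTheorem8 : AWcompact Kset.
Proof.
  split; [intros f Hf; apply Hf|].
  intros I U Hopen Hcov. apply NNPP. intros Hn. apply (main_contra I U Hopen Hcov Hn).
Qed.
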